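(* Let $\delta>1$, $\gamma>0$, $A_s,A_u>0$, $\rho_s,\rho_u>0$ with $\rho_u<\rho_s$, and write $a=\frac{\delta-1}{\delta}$. For $L>0$ define \[ s^*(L)=\left[\gamma^{-\delta}A_s^{\delta-1}L\right]^{\frac{1}{1+\delta\rho_s}},\quad u^*(L)=\left[\gamma^{-\delta}A_u^{\delta-1}L\right]^{\frac{1}{1+\delta\rho_u}}, \] \[ w_s^*(L)=\gamma\, s^*(L)^{\rho_s},\quad w_u^*(L)=\gamma\, u^*(L)^{\rho_u}, \] and for $x>0$ define $\overline{w}(x)=\dfrac{\left[A_u^{a}+A_s^{a}x^{a}\right]^{\frac{\delta}{\delta-1}}}{1+x}$ and $\pi(x)=\left(\frac{A_s}{A_u}\right)^{a}x^{-1/\delta}$. Then: (i) $s^*,u^*,w_s^*,w_u^*$ are strictly increasing in $L$; (ii) $s^*(L)/u^*(L)$ is strictly decreasing in $L$, and on any open interval $I\subset(0,\infty)$ such that the skill premium satisfies $\pi\big(s^*(L)/u^*(L)\big)>1$ for all $L\in I$, the average wage $L\mapsto\overline{w}\big(s^*(L)/u^*(L)\big)$ is strictly decreasing on $I$.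
   Context: Model of the legal labor market: skilled ($s$) and unskilled ($u$) workers with labor supply $j=(w_j/\gamma)^{1/\rho_j}$; a competitive firm produces legal services with CES technology $L=\left[(A_u u)^{\frac{\delta-1}{\delta}}+(A_s s)^{\frac{\delta-1}{\delta}}\right]^{\frac{\delta}{\delta-1}}$ and pays marginal products $w_j=A_j^{\frac{\delta-1}{\delta}}(L/j)^{1/\delta}$; $L>0$ is treated as an exogenous demand parameter (raised by local bankruptcy filings). $s^*,u^*,w_s^*,w_u^*$ are the equilibrium quantities and wages, $\pi$ is the skill premium $w_s/w_u$ expressed through $x=s/u$, and $\overline{w}$ is the average wage $(uw_u+sw_s)/(u+s)$ expressed through $x=s/u$. *)

(* Defs.v *)
From Stdlib Require Import Reals.
From Coquelicot Require Import Rbar.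
Open Scope R_scope.

Definition aexp (del : R) : R := (del - 1) / del.

Definition sstar (gam As del rhos L : R) : R :=
  Rpower (Rpower gam (- del) * Rpower As (del - 1) * L) (1 / (1 + del * rhos)).

Definition ustar (gam Au del rhou L : R) : R :=
  Rpower (Rpower gam (- del) * Rpower Au (del - 1) * L) (1 / (1 + del * rhou)).

Definition wsstar (gam As del rhos L : R) : R :=
  gam * Rpower (sstar gam As del rhos L) rhos.

Definition wustar (gam Au del rhou L : R) : R :=
  gam * Rpower (ustar gam Au del rhou L) rhou.

Definition wbar (Au As del x : R) : R :=
  Rpower (Rpower Au (aexp del) + Rpower As (aexp del) * Rpower x (aexp del))
         (del / (del - 1)) / (1 + x).

Definition skill_premium (Au As del x : R) : R :=
  Rpower (As / Au) (aexp del) * Rpower x (- (1 / del)).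

(* Main.v *)
Require Import Defs.
From Stdlib Require Import Reals.
From Coquelicot Require Import Rbar.
Open Scope R_scope.

From Stdlib Require Import Lra.

Lemma Rpower_pos x y : 0 < Rpower x y.
Proof. unfold Rpower; apply exp_pos. Qed.

Lemma Rpower_neg_decr e L1 L2 : e < 0 -> 0 < L1 -> L1 < L2 -> Rpower L2 e < Rpower L1 e.
Proof.
  intros he h1 h2. unfold Rpower. apply exp_increasing.
  assert (ln L1 < ln L2) by (apply ln_increasing; lra). nra.
Qed.

Lemma wbar_incr Au As del x1 x2 : 1 < del -> 0 < As -> 0 < Au -> 0 < x1 -> x1 < x2 ->
  1 < skill_premium Au As del x2 -> wbar Au As del x1 < wbar Au As del x2.
Proof.
  intros hd hs hu h1 h2 hp.
  set (a := aexp del). set (p := del / (del - 1)).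
  assert (hap : p * a = 1) by (unfold p, a, aexp; field; lra).
  assert (ha1 : a - 1 = - (1 / del)) by (unfold a, aexp; field; lra).
  set (S := fun y => Rpower Au a + Rpower As a * Rpower y a).
  set (F := fun y => Rpower (S y) p).
  set (dF := fun c => p * Rpower (S c) (p - 1) * (Rpower As a * (a * Rpower c (a - 1)))).
  set (fp := fun c => (dF c * (1 + c) - 1 * F c) / Rsqr (1 + c)).
  assert (Hd : forall c, 0 < c -> derivable_pt_lim (fun y => wbar Au As del y) c (fp c)).
  { intros c hc.
    assert (HS : derivable_pt_lim S c (Rpower As a * (a * Rpower c (a - 1)))).
    { pose proof (derivable_pt_lim_plus (fun _ => Rpower Au a)
         (fun y => Rpower As a * Rpower y a) c 0 _ (derivable_pt_lim_const _ c)
         (derivable_pt_lim_scal (fun y => Rpower y a) (Rpower As a) c _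
            (derivable_pt_lim_power c a hc))) as H.
      replace (Rpower As a * (a * Rpower c (a - 1))) with
        (0 + Rpower As a * (a * Rpower c (a - 1))) by ring. exact H. }
    assert (HSp : 0 < S c).
    { unfold S. pose proof (Rpower_pos Au a). pose proof (Rpower_pos As a).
      pose proof (Rpower_pos c a). nra. }
    assert (HF : derivable_pt_lim F c (dF c)).
    { pose proof (derivable_pt_lim_comp S (fun z => Rpower z p) c _ _ HS
        (derivable_pt_lim_power (S c) p HSp)) as H.
      unfold dF. unfold comp in H. unfold F. exact H. }
    assert (H1 : derivable_pt_lim (fun y => 1 + y) c 1).
    { pose proof (derivable_pt_lim_plus (fun _ => 1) (fun y => y) c 0 1
        (derivable_pt_lim_const _ c) (derivable_pt_lim_id c)) as H.
      rewrite Rplus_0_l in H. exact H. }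
    pose proof (derivable_pt_lim_div F (fun y => 1 + y) c _ _ HF H1 ltac:(lra)) as H.
    exact H. }
  destruct (MVT_cor2 (fun y => wbar Au As del y) fp x1 x2 h2
    ltac:(intros c hc; apply Hd; lra)) as [c [Heq Hc]].
  assert (Hpos : 0 < fp c).
  { assert (hcpos : 0 < c) by lra.
    assert (ha1n : a - 1 < 0).
    { rewrite ha1. assert (0 < 1/del) by (apply Rdiv_lt_0_compat; lra). lra. }
    assert (Hq : Rpower (As / Au) a * Rpower Au a = Rpower As a).
    { rewrite Rpower_mult_distr; [|apply Rdiv_lt_0_compat; lra|lra].
      f_equal. field. lra. }
    assert (Hc2 : Rpower x2 (a - 1) < Rpower c (a - 1)) by (apply Rpower_neg_decr; lra).
    assert (Hkey : Rpower Au a < Rpower As a * Rpower c (a - 1)).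
    { unfold skill_premium in hp. fold a in hp. rewrite <- ha1 in hp.
      pose proof (Rpower_pos Au a). pose proof (Rpower_pos (As/Au) a).
      rewrite <- Hq.
      assert (0 < Rpower (As / Au) a * Rpower Au a) by (apply Rmult_lt_0_compat; auto).
      apply Rmult_lt_compat_l with (r := Rpower Au a) in hp; auto.
      assert (Rpower (As / Au) a * Rpower Au a * Rpower x2 (a - 1) <
              Rpower (As / Au) a * Rpower Au a * Rpower c (a - 1))
        by (apply Rmult_lt_compat_l; auto).
      nra. }
    assert (HFc : F c = Rpower (S c) (p - 1) * S c).
    { unfold F. pattern p at 1. replace p with ((p - 1) + 1) by ring.
      rewrite Rpower_plus. rewrite Rpower_1; [ring|].
      unfold S. pose proof (Rpower_pos Au a). pose proof (Rpower_pos As a).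
      pose proof (Rpower_pos c a). nra. }
    assert (Hcc : Rpower c (a - 1) * c = Rpower c a).
    { pattern c at 2. rewrite <- (Rpower_1 c) by lra. rewrite <- Rpower_plus. f_equal. ring. }
    assert (Hnum : dF c * (1 + c) - 1 * F c =
       Rpower (S c) (p - 1) * (Rpower As a * Rpower c (a - 1) - Rpower Au a)).
    { rewrite HFc. unfold dF, S.
      replace (p * Rpower (Rpower Au a + Rpower As a * Rpower c a) (p - 1) *
        (Rpower As a * (a * Rpower c (a - 1))) * (1 + c))
      with (Rpower (Rpower Au a + Rpower As a * Rpower c a) (p - 1) * (p * a) *
        Rpower As a * (Rpower c (a - 1) + Rpower c (a-1) * c)) by ring.
      rewrite hap, Hcc. ring. }
    unfold fp. rewrite Hnum. apply Rdiv_lt_0_compat.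
    - apply Rmult_lt_0_compat; [apply Rpower_pos|lra].
    - unfold Rsqr. nra. }
  nra.
Qed.

Lemma ratio_eq gam A1 A2 del r1 r2 L : 0 < gam -> 0 < A1 -> 0 < A2 -> 0 < L ->
  sstar gam A1 del r1 L / ustar gam A2 del r2 L =
  (Rpower (Rpower gam (- del) * Rpower A1 (del - 1)) (1 / (1 + del * r1)) /
   Rpower (Rpower gam (- del) * Rpower A2 (del - 1)) (1 / (1 + del * r2))) *
  Rpower L (1 / (1 + del * r1) - 1 / (1 + del * r2)).
Proof.
  intros hg h1 h2 hL. unfold sstar, ustar.
  assert (k1 : 0 < Rpower gam (- del) * Rpower A1 (del - 1))
    by (apply Rmult_lt_0_compat; apply Rpower_pos).
  assert (k2 : 0 < Rpower gam (- del) * Rpower A2 (del - 1))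
    by (apply Rmult_lt_0_compat; apply Rpower_pos).
  generalize dependent (Rpower gam (- del) * Rpower A1 (del - 1)).
  generalize dependent (Rpower gam (- del) * Rpower A2 (del - 1)).
  generalize (1 / (1 + del * r1)) (1 / (1 + del * r2)).
  intros e1 e2 K2 k2 K1 k1.
  rewrite <- (Rpower_mult_distr K1 L) by auto.
  rewrite <- (Rpower_mult_distr K2 L) by auto.
  assert (E : Rpower L (e1 - e2) = Rpower L e1 * / Rpower L e2).
  { unfold Rminus. rewrite Rpower_plus, Rpower_Ropp. reflexivity. }
  rewrite E.
  pose proof (Rpower_pos K2 e2). pose proof (Rpower_pos L e2).
  field. lra.
Qed.

Theorem proposition2 (del gam As Au rhos rhou : R)
  (hdel : 1 < del) (hgam : 0 < gam) (hAs : 0 < As) (hAu : 0 < Au)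
  (hrhos : 0 < rhos) (hrhou : 0 < rhou) (hrho : rhou < rhos) :
  (* (i) strictly increasing in L on (0, oo) *)
  (forall L1 L2, 0 < L1 -> L1 < L2 ->
     sstar gam As del rhos L1 < sstar gam As del rhos L2 /\
     ustar gam Au del rhou L1 < ustar gam Au del rhou L2 /\
     wsstar gam As del rhos L1 < wsstar gam As del rhos L2 /\
     wustar gam Au del rhou L1 < wustar gam Au del rhou L2) /\
  (* (ii) s*/u* strictly decreasing in L *)
  (forall L1 L2, 0 < L1 -> L1 < L2 ->
     sstar gam As del rhos L2 / ustar gam Au del rhou L2
     < sstar gam As del rhos L1 / ustar gam Au del rhou L1) /\
  (* (ii) on any open interval I = (a, b) of (0, oo) (b possibly +oo) on which
     the skill premium exceeds 1, the average wage is strictly decreasing *)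
  (forall (a : R) (b : Rbar), 0 <= a -> Rbar_lt a b ->
     (forall L, a < L -> Rbar_lt L b ->
        1 < skill_premium Au As del
              (sstar gam As del rhos L / ustar gam Au del rhou L)) ->
     forall L1 L2, a < L1 -> L1 < L2 -> Rbar_lt L2 b ->
       wbar Au As del (sstar gam As del rhos L2 / ustar gam Au del rhou L2)
       < wbar Au As del (sstar gam As del rhos L1 / ustar gam Au del rhou L1)).

Proof.
  set (es := 1 / (1 + del * rhos)). set (eu := 1 / (1 + del * rhou)).
  assert (hes : 0 < es) by (unfold es; apply Rdiv_lt_0_compat; nra).
  assert (heu : 0 < eu) by (unfold eu; apply Rdiv_lt_0_compat; nra).
  assert (hee : es - eu < 0).
  { unfold es, eu. unfold Rdiv. rewrite !Rmult_1_l.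
    assert (/ (1 + del * rhos) < / (1 + del * rhou)) by (assert (0 < del * rhou) by nra; assert (del * rhou < del * rhos) by nra;
          apply Rinv_lt_contravar; nra).
    lra. }
  assert (Hdec : forall L1 L2, 0 < L1 -> L1 < L2 ->
     sstar gam As del rhos L2 / ustar gam Au del rhou L2
     < sstar gam As del rhos L1 / ustar gam Au del rhou L1).
  { intros L1 L2 h1 h2. rewrite !ratio_eq by lra. fold es eu.
    apply Rmult_lt_compat_l.
    - apply Rdiv_lt_0_compat; apply Rpower_pos.
    - apply Rpower_neg_decr; lra. }
  split; [|split].
  - intros L1 L2 h1 h2.
    assert (ks : 0 < Rpower gam (- del) * Rpower As (del - 1))
      by (apply Rmult_lt_0_compat; apply Rpower_pos).
    assert (ku : 0 < Rpower gam (- del) * Rpower Au (del - 1))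
      by (apply Rmult_lt_0_compat; apply Rpower_pos).
    assert (Hs : sstar gam As del rhos L1 < sstar gam As del rhos L2).
    { unfold sstar. apply Rlt_Rpower_l; auto. split; nra. }
    assert (Hu : ustar gam Au del rhou L1 < ustar gam Au del rhou L2).
    { unfold ustar. apply Rlt_Rpower_l; auto. split; nra. }
    split; [exact Hs|split; [exact Hu|split]].
    + unfold wsstar. apply Rmult_lt_compat_l; auto. apply Rlt_Rpower_l; auto.
      split; auto. unfold sstar. apply Rpower_pos.
    + unfold wustar. apply Rmult_lt_compat_l; auto. apply Rlt_Rpower_l; auto.
      split; auto. unfold ustar. apply Rpower_pos.
  - exact Hdec.
  - intros a b ha hab Hp L1 L2 h1 h2 h3.
    apply wbar_incr; auto.
    + apply Rdiv_lt_0_compat; [unfold sstar|unfold ustar]; apply Rpower_pos.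
    + apply Hdec; lra.
    + apply Hp; auto. destruct b as [b| |]; simpl in *; auto; lra.
Qed.
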